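(* Let $\mathcal{R}$ be a fusion ring with basis $\{x_1=1,\ldots,x_m\}$ and fusion matrices $M_j$, and for $n\ge1$ let $T_n=\sum_{i=1}^m\|M_i\|^2\big(M_i/\|M_i\|\big)^{\otimes n}$. If $n\ge2$ and $T_n\geq0$, then $T_{n-1}\geq 0$.
   Context: A fusion ring is a ring $\mathcal{R}$ which is a free $\mathbb{Z}$-module with a finite basis $\{x_1=1,\ldots,x_m\}$ such that $x_ix_j=\sum_k N_{ij}^k x_k$ with $N_{ij}^k\in\mathbb{N}$; there is an involution $i\mapsto i^*$ whose $\mathbb{Z}$-linear extension is an anti-involution of $\mathcal{R}$; and the coefficient of $x_1$ in $x_ix_j$ equals $\delta_{i,j^*}$. The fusion matrix is $(M_j)_{k,i}=N_{ji}^k$, $\|M_j\|$ its operator norm on $\mathbb{C}^m$, $\otimes n$ the Kronecker power, and $A\ge0$ means positive semidefinite. *)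

(* Defs.v *)
From HB Require Import structures.
From mathcomp Require Import all_boot all_order all_algebra.
From mathcomp Require Import classical_sets reals.
From mathcomp Require Import complex mxtens.
Set Implicit Arguments. Unset Strict Implicit. Unset Printing Implicit Defensive.
Import Order.TTheory GRing.Theory Num.Theory.
Local Open Scope ring_scope.

(* A fusion ring of rank m.+1: basis x_0 = 1, x_1, ..., x_m indexed by 'I_m.+1,
   structure constants x_i x_j = \sum_k N i j k x_k, involution i |-> dual i. *)
Definition is_fusion_ring (m : nat) (N : 'I_m.+1 -> 'I_m.+1 -> 'I_m.+1 -> nat)
    (dual : 'I_m.+1 -> 'I_m.+1) : Prop :=
  [/\
      (forall j k, N ord0 j k = (j == k) :> nat /\ N j ord0 k = (j == k) :> nat),
      (* associativity: (x_i x_j) x_l = x_i (x_j x_l) *)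
      (forall i j l t, (\sum_(k < m.+1) N i j k * N k l t =
                        \sum_(k < m.+1) N j l k * N i k t)%N),
      (forall i, dual (dual i) = i),
      (* its Z-linear extension is an anti-involution: (x_i x_j)^* = x_j^* x_i^* *)
      (forall i j k, N (dual j) (dual i) (dual k) = N i j k) &
      (forall i j, N i j ord0 = (i == dual j) :> nat)].

Section FusionDefs.
Variable R : realType.
Local Notation C := R[i].

Definition fusion_mx (m : nat) (N : 'I_m.+1 -> 'I_m.+1 -> 'I_m.+1 -> nat)
    (j : 'I_m.+1) : 'M[C]_m.+1 :=
  \matrix_(k, i) (N j i k)%:R.

Definition cabs2 (z : C) : R := let: Complex a b := z in a ^+ 2 + b ^+ 2.

Definition vnorm (n : nat) (v : 'cV[C]_n) : R :=
  Num.sqrt (\sum_(i < n) cabs2 (v i 0)).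

Definition opnorm (n : nat) (A : 'M[C]_n) : R :=
  sup [set vnorm (A *m v) | v in [set v : 'cV[C]_n | vnorm v <= 1]].

Definition psd (n : nat) (A : 'M[C]_n) : Prop :=
  forall v : 'cV[C]_n, 0 <= ((map_mx conjc v)^T *m A *m v) 0 0.

Definition Tmx (m : nat) (N : 'I_m.+1 -> 'I_m.+1 -> 'I_m.+1 -> nat) (n : nat)
    : 'M[C]_(m.+1 ^ n) :=
  \sum_(i < m.+1)
     ((opnorm (fusion_mx N i)) ^+ 2)%:C%C *:
       (((opnorm (fusion_mx N i))^-1)%:C%C *: fusion_mx N i) ^t n.

End FusionDefs.

(* Main.v *)
Require Import Defs.
From HB Require Import structures.
From mathcomp Require Import all_boot all_order all_algebra.
From mathcomp Require Import classical_sets reals.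
From mathcomp Require Import complex mxtens.
From mathcomp Require Import ring lra.
Import Order.TTheory GRing.Theory Num.Theory.
Local Open Scope ring_scope.
Set Implicit Arguments. Unset Strict Implicit. Unset Printing Implicit Defensive.

Section Form.
Variable R : realType.
Variable n : nat.
Implicit Types (X P : 'M[R]_n) (u v : 'rV[R]_n).

Lemma disc (a b c : R) : 0 <= c -> (forall t, 0 <= a + 2 * b * t + c * t ^+ 2) -> b ^+ 2 <= a * c.
Proof.
move=> c0 H.
have [cp|] := ltrP 0 c.
  have := H (- b / c). set t := - b / c.
  have ht : c * t = - b by rewrite /t mulrCA mulfV ?gt_eqF // mulr1.
  move=> h. 
  have e : c * (a + 2 * b * t + c * t ^+ 2) = a * c + 2 * b * (c * t) + (c * t) ^+ 2 by ring.
  rewrite ht in e.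
  have := mulr_ge0 (ltW cp) h. rewrite e. 
  have -> : a * c + 2 * b * - b + (- b) ^+ 2 = a * c - b ^+ 2 by ring.
  lra.
move=> cle; have c00 : c = 0 by apply/le_anti; rewrite cle c0.
subst c. rewrite mulr0.
have [b0|bn0] := eqVneq b 0; first by rewrite b0 expr0n.
have := H (- (`|a| + 1) / (2 * b)).
have e : 2 * b * (- (`|a| + 1) / (2 * b)) = - (`|a| + 1).
  by field.
rewrite mul0r addr0 e. have := ler_norm a. lra.
Qed.

Definition form X u v := (u *m X *m v^T) 0 0.
Definition sq u := \sum_i u 0 i ^+ 2.

Lemma formE X u v : form X u v = \sum_i \sum_j u 0 i * X i j * v 0 j.
Proof.
rewrite /form mxE. under eq_bigr => j _ do rewrite mxE big_distrl /=.
rewrite exchange_big /=; apply: eq_bigr => i _; apply: eq_bigr => j _.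
by rewrite !mxE.
Qed.

Lemma form1 u : form 1%:M u u = sq u.
Proof.
rewrite formE /sq; apply: eq_bigr => i _.
rewrite (bigD1 i) //= big1 ?addr0 ?mxE ?eqxx ?mulr1 ?expr2 //.
by move=> j ji; rewrite mxE eq_sym (negbTE ji) mulr0 mul0r.
Qed.

Lemma sq_ge0 u : 0 <= sq u.
Proof. by apply: sumr_ge0 => i _; rewrite sqr_ge0. Qed.

Lemma sq_eq0 u : sq u = 0 -> u = 0.
Proof.
move=> /eqP; rewrite psumr_eq0 => [/allP H|i _]; last by rewrite sqr_ge0.
apply/rowP => i; rewrite mxE; apply/eqP; rewrite -sqrf_eq0.
by apply: H; rewrite mem_index_enum.
Qed.

Lemma sq_ge_coef u i : u 0 i ^+ 2 <= sq u.
Proof.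
rewrite /sq (bigD1 i) //= lerDl; apply: sumr_ge0 => j _; exact: sqr_ge0.
Qed.

Lemma formDl X u1 u2 v : form X (u1 + u2) v = form X u1 v + form X u2 v.
Proof. by rewrite /form !mulmxDl mxE. Qed.
Lemma formDr X u v1 v2 : form X u (v1 + v2) = form X u v1 + form X u v2.
Proof. by rewrite /form linearD /= mulmxDr mxE. Qed.
Lemma formZl X a u v : form X (a *: u) v = a * form X u v.
Proof. by rewrite /form -!scalemxAl mxE. Qed.
Lemma formZr X a u v : form X u (a *: v) = a * form X u v.
Proof. by rewrite /form linearZ /= -scalemxAr mxE. Qed.
Lemma formN X u v : form X (- u) v = - form X u v.
Proof. by rewrite -scaleN1r formZl mulN1r. Qed.
Lemma formNr X u v : form X u (- v) = - form X u v.
Proof. by rewrite -scaleN1r formZr mulN1r. Qed.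
Lemma formC X u v : X^T = X -> form X v u = form X u v.
Proof.
move=> XT; rewrite !formE exchange_big; apply: eq_bigr => i _.
apply: eq_bigr => j _; rewrite -[in LHS]XT mxE; ring.
Qed.
Lemma formBl X u1 u2 v : form X (u1 - u2) v = form X u1 v - form X u2 v.
Proof. by rewrite formDl formN. Qed.
Lemma formBr X u v1 v2 : form X u (v1 - v2) = form X u v1 - form X u v2.
Proof. by rewrite formDr formNr. Qed.
Lemma formDm X Y u v : form (X + Y) u v = form X u v + form Y u v.
Proof. by rewrite /form mulmxDr mulmxDl mxE. Qed.
Lemma formNm X u v : form (- X) u v = - form X u v.
Proof. by rewrite /form mulmxN mulNmx mxE. Qed.
Lemma form_scalar a u v : form a%:M u v = a * form 1%:M u v.
Proof. by rewrite /form !mul_mx_scalar -!scalemxAl !mxE mul1r. Qed.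
Lemma form_delta X u j : form X u (delta_mx 0 j) = (u *m X) 0 j.
Proof.
rewrite /form mxE (bigD1 j) //= big1 ?addr0.
  by rewrite !mxE !eqxx mulr1.
by move=> k kj; rewrite !mxE (negbTE kj) andbF mulr0.
Qed.

Lemma form_bound X u : form X u u <= (2 * \sum_i \sum_j `|X i j|) * sq u.
Proof.
rewrite formE; have hi := sq_ge_coef u; move: (sq u) hi => s hs.
have -> : (2 * \sum_i \sum_j `|X i j|) * s = 
   \sum_i \sum_j (2 * `|X i j| * s).
  rewrite mulr_sumr mulr_suml; apply: eq_bigr => i _.
  rewrite mulr_sumr mulr_suml; apply: eq_bigr => j _; ring.
 apply: ler_sum => i _; apply: ler_sum => j _.
apply: le_trans (ler_norm _) _; rewrite !normrM.
have hi := hs i; have hj := hs j.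
have h2 : `|u 0 i| * `|u 0 j| <= u 0 i ^+ 2 + u 0 j ^+ 2.
  have := sqr_ge0 (`|u 0 i| - `|u 0 j|); rewrite sqrrB !real_normK ?num_real //.
  have := mulr_ge0 (normr_ge0 (u 0 i)) (normr_ge0 (u 0 j)).
  move: (`|u 0 i| * `|u 0 j|) => p. lra.
have h3 : `|u 0 i| * `|u 0 j| <= 2 * s by lra.
have -> : `|u 0 i| * `|X i j| * `|u 0 j| = `|X i j| * (`|u 0 i| * `|u 0 j|) by ring.
have -> : 2 * `|X i j| * s = `|X i j| * (2 * s) by ring.
by apply: ler_wpM2l.
Qed.

End Form.

Section PF.
Variables (R : realType) (n : nat) (B : 'M[R]_n) (z : 'I_n).
Hypotheses (BT : B^T = B) (B0 : forall i j, 0 <= B i j) (Bz : forall k, B k z = 1).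

Definition RS := ([set form B x x / sq x | x in [set x : 'rV[R]_n | x != 0]])%classic.
Definition lam := sup RS.
Definition KB := 2 * \sum_i \sum_j `|B i j|.

Lemma sq_gt0 (x : 'rV[R]_n) : x != 0 -> 0 < sq x.
Proof.
move=> xn0; rewrite lt_def sq_ge0 andbT; apply/eqP => /sq_eq0 x0.
by rewrite x0 eqxx in xn0.
Qed.

Lemma ez_neq0 : (delta_mx 0 z : 'rV[R]_n) != 0.
Proof.
apply/eqP => /rowP /(_ z); rewrite !mxE !eqxx /= => /eqP; by rewrite oner_eq0.
Qed.

Lemma RS_ub : ubound RS KB.
Proof.
move=> _ [x /= xn0 <-]; rewrite ler_pdivrMr ?sq_gt0 //; exact: form_bound.
Qed.

Lemma RS_n0 : (RS !=set0)%classic.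
Proof. by exists (form B (delta_mx 0 z) (delta_mx 0 z) / sq (delta_mx 0 z)), (delta_mx 0 z); first exact: ez_neq0. Qed.

Lemma form0 X (x : 'rV[R]_n) : form X 0 x = 0.
Proof. by rewrite /form !mul0mx mxE. Qed.

Lemma sq0 : sq (0 : 'rV[R]_n) = 0.
Proof. by rewrite /sq big1 // => i _; rewrite mxE expr0n. Qed.

Lemma lam_ge x : form B x x <= lam * sq x.
Proof.
have [->|xn0] := eqVneq x 0; first by rewrite form0 sq0 mulr0.
rewrite -ler_pdivrMr ?sq_gt0 //; apply: ub_le_sup; first by exists KB; exact: RS_ub.
by exists x.
Qed.

Lemma sq_ez : sq (delta_mx 0 z : 'rV[R]_n) = 1.
Proof.
rewrite /sq (bigD1 z) //= big1 ?addr0 ?mxE ?eqxx ?expr1n //.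
by move=> j jz; rewrite mxE (negbTE jz) andbF expr0n.
Qed.

Lemma lam_ge1 : 1 <= lam.
Proof.
have := lam_ge (delta_mx 0 z); rewrite sq_ez mulr1 form_delta.
by rewrite mxE (bigD1 z) //= big1 ?addr0 ?mxE ?eqxx ?mul1r ?Bz // => j jz; rewrite mxE (negbTE jz) andbF mul0r.
Qed.

Lemma lam_gt0 : 0 < lam.
Proof. by apply: lt_le_trans lam_ge1. Qed.

Definition P := lam%:M - B.

Lemma PT : P^T = P.
Proof. by rewrite /P linearB /= tr_scalar_mx BT. Qed.

Lemma formP x y : form P x y = lam * form 1%:M x y - form B x y.
Proof. by rewrite /P formDm formNm form_scalar. Qed.

Lemma P_psd x : 0 <= form P x x.
Proof. by rewrite formP form1 subr_ge0 lam_ge. Qed.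

Lemma CS u v : form P u v ^+ 2 <= form P u u * form P v v.
Proof.
apply: disc; first exact: P_psd.
move=> t; have := P_psd (u + t *: v).
rewrite !formDl !formDr !formZl !formZr (formC _ _ PT); lra.
Qed.

Lemma ker_of_form0 u : form P u u = 0 -> u *m P = 0.
Proof.
move=> H; apply/rowP => j; rewrite [RHS]mxE -form_delta.
have := CS u (delta_mx 0 j); rewrite H mul0r.
by move=> h; apply/eqP; rewrite -sqrf_eq0 eq_le h sqr_ge0.
Qed.

Lemma detP0 : \det P = 0.
Proof.
apply/eqP/negPn/negP => dP.
have uP : P \in unitmx by rewrite unitmxE unitfE.
set Q := invmx P.
have QT : Q^T = Q by rewrite /Q trmx_inv PT.
set KQ := 2 * \sum_i \sum_j `|Q i j|.
have key x : sq x ^+ 2 <= KQ * sq x * form P x x.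
  have e1 : form P (x *m Q) x = sq x.
    by rewrite -form1 /form -(mulmxA x Q P) mulVmx.
  have e2 : form P (x *m Q) (x *m Q) = form Q x x.
    rewrite /form trmx_mul QT -!mulmxA (mulmxA P) mulmxV // mul1mx //.
  have := CS (x *m Q) x; rewrite e1 e2 => h; apply: le_trans h _.
  by apply: ler_wpM2r; [exact: P_psd | exact: form_bound].
have KQp : 0 < KQ.
  have h1 := key (delta_mx 0 z); rewrite sq_ez expr1n mulr1 in h1.
  have h2 := P_psd (delta_mx 0 z); rewrite ltNge; apply/negP => KQ0.
  have : KQ * form P (delta_mx 0 z) (delta_mx 0 z) <= 0.
    by apply: mulr_le0_ge0.
  lra.
have : lam <= lam - KQ^-1.
  apply: ge_sup; first exact: RS_n0.
  move=> _ [x /= xn0 <-]; rewrite ler_pdivrMr ?sq_gt0 //.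
  have sp := sq_gt0 xn0.
  have h := key x; rewrite expr2 (mulrC KQ) -mulrA ler_pM2l // in h.
  have : sq x / KQ <= form P x x by rewrite ler_pdivrMr // mulrC.
  rewrite formP form1 mulrBl; move: (form B x x) => b.
  rewrite mulrC; lra.
have := invr_gt0 KQ; rewrite KQp. lra.
Qed.


Lemma formK (u v : 'rV[R]_n) : u *m P = 0 -> form P u v = 0.
Proof. by move=> H; rewrite /form H mul0mx mxE. Qed.

Lemma kerE (u : 'rV[R]_n) : u *m P = 0 -> forall k, \sum_i u 0 i * B i k = lam * u 0 k.
Proof.
move=> H k; have := congr1 (fun M : 'M[R]_(1,n) => M 0 k) H.
rewrite /P mulmxBr mul_mx_scalar !mxE => /eqP; rewrite subr_eq0 => /eqP <-.
by [].
Qed.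

Lemma ker_abs (u : 'rV[R]_n) : u *m P = 0 -> map_mx (fun x => `|x|) u *m P = 0.
Proof.
move=> H; apply: ker_of_form0; apply/eqP; rewrite eq_le P_psd andbT.
rewrite -(formK u H) !formP !form1.
have -> : sq (map_mx (fun x => `|x|) u) = sq u.
  by apply: eq_bigr => i _; rewrite mxE real_normK ?num_real.
rewrite lerD2l lerN2 !formE; apply: ler_sum => i _; apply: ler_sum => j _.
rewrite !mxE; apply: le_trans (ler_norm _) _.
by rewrite !normrM (ger0_norm (B0 i j)).
Qed.

Lemma ker_pos (u : 'rV[R]_n) : u *m P = 0 -> (forall i, 0 <= u 0 i) -> u != 0 ->
  forall i, 0 < u 0 i.
Proof.
move=> H u0 un0.
have hz : 0 < u 0 z.
  have := kerE H z; under eq_bigr => i _ do rewrite Bz mulr1.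
  move=> e; rewrite -(pmulr_rgt0 _ lam_gt0) -e.
  rewrite lt_def sumr_ge0 ?andbT //; apply/eqP => /eqP.
  rewrite psumr_eq0 // => /allP h; move: un0; apply/negP; rewrite negbK.
  apply/eqP/rowP => i; rewrite mxE; apply/eqP; apply: h; exact: mem_index_enum.
move=> k; rewrite -(pmulr_rgt0 _ lam_gt0) -(kerE H k).
apply: lt_le_trans hz _.
rewrite (bigD1 z) //= -{1}(addr0 (u 0 z)).
have -> : B z k = 1 by rewrite -[B]BT mxE Bz.
rewrite mulr1 lerD2l; apply: sumr_ge0 => i _; exact: mulr_ge0.
Qed.

Lemma ker_unique (x u : 'rV[R]_n) : x *m P = 0 -> (forall i, 0 < x 0 i) -> u *m P = 0 ->
  exists c, u = c *: x.
Proof.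
move=> Hx xp Hu.
case: (@arg_minP _ _ _ z xpredT (fun i => u 0 i / x 0 i) erefl) => j _ Hj.
set c := u 0 j / x 0 j.
exists c; apply/eqP; rewrite -subr_eq0; apply/eqP.
set y := u - c *: x.
have Hy : y *m P = 0 by rewrite /y mulmxBl -scalemxAl Hx Hu scaler0 subr0.
have y0 : forall i, 0 <= y 0 i.
  move=> i; rewrite !mxE subr_ge0 -ler_pdivlMr //; exact: Hj.
apply/eqP; apply: contraT => yn0.
have := ker_pos Hy y0 yn0 j; rewrite !mxE /c divfK ?subrr ?ltxx //.
by rewrite gt_eqF.
Qed.

Lemma exists_pf : exists d : 'rV[R]_n, d *m P = 0 /\ forall i, 0 < d 0 i.
Proof.
have /det0P [v vn0 Hv] : \det P == 0 by rewrite detP0.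
exists (map_mx (fun x => `|x|) v); split; first exact: ker_abs.
apply: ker_pos; first exact: ker_abs.
  by move=> i; rewrite mxE.
apply: contra vn0 => /eqP/rowP h; apply/eqP/rowP => i.
by have := h i; rewrite !mxE => /normr0_eq0.
Qed.

Lemma pf_commute (d : 'rV[R]_n) (X : 'M[R]_n) : d *m P = 0 -> (forall i, 0 < d 0 i) ->
  X *m B = B *m X -> exists c, d *m X = c *: d.
Proof.
move=> Hd dp XB.
have dB : d *m B = d *m lam%:M.
  by apply/esym/eqP; rewrite -subr_eq0 -mulmxBr Hd.
apply: (ker_unique Hd dp).
rewrite /P mulmxBr -!mulmxA XB !mulmxA dB !mul_mx_scalar -scalemxAl subrr.
by [].
Qed.

End PF.

Section Schur.
Variables (R : realType) (n : nat).

Lemma wcs (a d x : 'I_n -> R) : (forall j, 0 <= a j) -> (forall j, 0 < d j) ->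
  (\sum_j a j * x j) ^+ 2 <= (\sum_j a j * d j) * (\sum_j a j * x j ^+ 2 / d j).
Proof.
move=> a0 d0.
set S1 := \sum_j a j * d j; set S2 := \sum_j a j * x j ^+ 2 / d j.
set S3 := \sum_j a j * x j.
have e t : \sum_j a j * (x j - t * d j) ^+ 2 / d j = S2 + (- (2 * t)) * S3 + t ^+ 2 * S1.
  have E j : a j * (x j - t * d j) ^+ 2 / d j =
      a j * x j ^+ 2 / d j + (- (2 * t)) * (a j * x j) + t ^+ 2 * (a j * d j).
    by field; rewrite gt_eqF.
  under eq_bigr => j _ do rewrite E.
  by rewrite !big_split /= -!mulr_sumr.
have S1ge0 : 0 <= S1 by apply: sumr_ge0 => j _; rewrite mulr_ge0 // ltW.
suff h : (- S3) ^+ 2 <= S2 * S1 by rewrite sqrrN mulrC in h.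
apply: (disc S1ge0) => t.
have : 0 <= \sum_j a j * (x j - t * d j) ^+ 2 / d j.
  by apply: sumr_ge0 => j _; apply: divr_ge0; [apply: mulr_ge0 => //; exact: sqr_ge0 | exact: ltW].
rewrite e; lra.
Qed.

Lemma schur (A : 'M[R]_n) (d : 'I_n -> R) (c : R) (x : 'I_n -> R) :
  (forall i j, 0 <= A i j) -> (forall j, 0 < d j) -> 0 <= c ->
  (forall k, \sum_j A k j * d j = c * d k) ->
  (forall j, \sum_k d k * A k j = c * d j) ->
  \sum_k (\sum_j A k j * x j) ^+ 2 <= c ^+ 2 * \sum_j x j ^+ 2.
Proof.
move=> A0 d0 c0 Hc Hr.
apply: (le_trans (y := \sum_k (\sum_j A k j * d j) * (\sum_j A k j * x j ^+ 2 / d j))).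
  by apply: ler_sum => k _; apply: wcs.
under eq_bigr => k _ do rewrite Hc.
have -> : \sum_k c * d k * \sum_j A k j * x j ^+ 2 / d j =
          \sum_k \sum_j c * (d k * A k j * (x j ^+ 2 / d j)).
  by apply: eq_bigr => k _; rewrite mulr_sumr; apply: eq_bigr => j _; ring.
rewrite exchange_big /=.
have -> : \sum_j \sum_k c * (d k * A k j * (x j ^+ 2 / d j)) =
          \sum_j c * (x j ^+ 2 / d j) * \sum_k d k * A k j.
  apply: eq_bigr => j _; rewrite mulr_sumr; apply: eq_bigr => k _; ring.
rewrite (eq_bigr (fun j => c * (x j ^+ 2 / d j) * (c * d j))); last by move=> j _; rewrite Hr.
rewrite mulr_sumr le_eqVlt; apply/orP; left; apply/eqP/eq_bigr => j _.
by field; rewrite gt_eqF.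
Qed.

End Schur.

Section OpNorm.
Variables (R : realType) (n : nat).
Local Notation C := R[i].
Local Notation Re := (@complex.Re R).
Local Notation Im := (@complex.Im R).

Lemma cabs2E (z : C) : cabs2 z = Re z ^+ 2 + Im z ^+ 2.
Proof. by case: z. Qed.

Lemma cabs2R (x : R) : cabs2 (x%:C)%C = x ^+ 2.
Proof. by rewrite cabs2E /= expr0n addr0. Qed.

Lemma Re_sum (I : finType) (F : I -> C) : Re (\sum_i F i) = \sum_i Re (F i).
Proof. exact: raddf_sum. Qed.
Lemma Im_sum (I : finType) (F : I -> C) : Im (\sum_i F i) = \sum_i Im (F i).
Proof. exact: raddf_sum. Qed.
Lemma ReRM (a : R) (z : C) : Re ((a%:C)%C * z) = a * Re z.
Proof. by case: z => x y /=; rewrite mul0r subr0. Qed.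
Lemma ImRM (a : R) (z : C) : Im ((a%:C)%C * z) = a * Im z.
Proof. by case: z => x y /=; rewrite mul0r addr0. Qed.

Definition colw (d : 'I_n -> R) : 'cV[C]_n :=
  \col_k ((d k / Num.sqrt (\sum_j d j ^+ 2))%:C)%C.

Lemma vnorm_real (x : 'I_n -> R) :
  vnorm (\col_k (x k)%:C)%C = Num.sqrt (\sum_k x k ^+ 2).
Proof. by rewrite /vnorm; congr Num.sqrt; apply: eq_bigr => k _; rewrite mxE cabs2R. Qed.

Lemma sum_colw (d : 'I_n -> R) (j0 : 'I_n) : (forall j, 0 < d j) ->
  \sum_k (d k / Num.sqrt (\sum_j d j ^+ 2)) ^+ 2 = 1.
Proof.
move=> d0; set S := \sum_j d j ^+ 2.
have Sp : 0 < S.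
  rewrite /S (bigD1 j0) //=; apply: lt_le_trans (_ : 0 < d j0 ^+ 2) _.
    by rewrite exprn_gt0.
  by rewrite lerDl sumr_ge0 // => j _; rewrite sqr_ge0.
under eq_bigr => k _ do rewrite expr_div_n sqr_sqrtr ?ltW //.
by rewrite -mulr_suml mulfV // gt_eqF.
Qed.

Lemma vnorm_colw (d : 'I_n -> R) (j0 : 'I_n) : (forall j, 0 < d j) ->
  vnorm (colw d) = 1.
Proof. by move=> d0; rewrite /colw vnorm_real (sum_colw j0 d0) sqrtr1. Qed.

Lemma Mcolw (A : 'M[R]_n) (d : 'I_n -> R) (c : R) :
  (forall k, \sum_j A k j * d j = c * d k) ->
  map_mx (real_complex R) A *m colw d =
    \col_k ((c * (d k / Num.sqrt (\sum_j d j ^+ 2)))%:C)%C.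
Proof.
move=> Hc; apply/matrixP => k l; rewrite !mxE.
rewrite mulrA -Hc mulr_suml rmorph_sum /=; apply: eq_bigr => j _.
by rewrite !mxE -mulrA [RHS]rmorphM.
Qed.

Lemma opnorm_eq (A : 'M[R]_n) (d : 'I_n -> R) (c : R) (j0 : 'I_n) :
  (forall i j, 0 <= A i j) -> (forall j, 0 < d j) -> 0 <= c ->
  (forall k, \sum_j A k j * d j = c * d k) ->
  (forall j, \sum_k d k * A k j = c * d j) ->
  opnorm (map_mx (real_complex R) A) = c.
Proof.
move=> A0 d0 c0 Hc Hr.
set M := map_mx _ A.
have key v : \sum_k cabs2 ((M *m v) k 0) <= c ^+ 2 * \sum_k cabs2 (v k 0).
  have E k : cabs2 ((M *m v) k 0) =
      (\sum_j A k j * Re (v j 0)) ^+ 2 + (\sum_j A k j * Im (v j 0)) ^+ 2.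
    rewrite cabs2E mxE Re_sum Im_sum; congr (_ ^+ 2 + _ ^+ 2);
      by apply: eq_bigr => j _; rewrite mxE (ReRM, ImRM).
  under eq_bigr => k _ do rewrite E.
  under [X in _ <= _ * X]eq_bigr => k _ do rewrite cabs2E.
  rewrite big_split /= big_split /= mulrDr.
  apply: lerD; exact: schur.
have ub : ubound ([set vnorm (M *m v) | v in [set v : 'cV[C]_n | vnorm v <= 1]])%classic c.
  move=> _ [v /= vle <-]; rewrite /vnorm.
  apply: le_trans (_ : Num.sqrt (c ^+ 2 * \sum_k cabs2 (v k 0)) <= c).
    rewrite ler_sqrt ?key //; apply: mulr_ge0; first exact: sqr_ge0.
    by apply: sumr_ge0 => k _; rewrite cabs2E addr_ge0 ?sqr_ge0.
  rewrite sqrtrM ?sqr_ge0 // sqrtr_sqr ger0_norm //.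
  by rewrite -[leRHS]mulr1 ler_wpM2l.
apply/le_anti/andP; split.
  apply: ge_sup => //; exists (vnorm (M *m colw d)), (colw d) => //=.
  by rewrite (vnorm_colw j0 d0).
apply: ub_le_sup; first by exists c.
exists (colw d) => /=; first by rewrite (vnorm_colw j0 d0).
rewrite /M (Mcolw Hc) vnorm_real.
under eq_bigr => k _ do rewrite exprMn.
by rewrite -mulr_sumr (sum_colw j0 d0) mulr1 sqrtr_sqr ger0_norm.
Qed.

End OpNorm.

Section Fusion.
Variables (R : realType) (m : nat) (N : 'I_m.+1 -> 'I_m.+1 -> 'I_m.+1 -> nat)
  (dual : 'I_m.+1 -> 'I_m.+1).
Hypothesis FR : is_fusion_ring N dual.

Let unitL j k : N ord0 j k = (j == k). Proof. by case: FR => H _ _ _ _; case: (H j k). Qed.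
Let unitR j k : N j ord0 k = (j == k). Proof. by case: FR => H _ _ _ _; case: (H j k). Qed.
Let assoc i j l t : (\sum_(k < m.+1) N i j k * N k l t = \sum_(k < m.+1) N j l k * N i k t)%N.
Proof. by case: FR => _ H _ _ _; apply: H. Qed.
Let invol i : dual (dual i) = i. Proof. by case: FR => _ _ H _ _; apply: H. Qed.
Let anti i j k : N (dual j) (dual i) (dual k) = N i j k. Proof. by case: FR => _ _ _ H _; apply: H. Qed.
Let delta i j : N i j ord0 = (i == dual j). Proof. by case: FR => _ _ _ _ H; apply: H. Qed.

Let sum_ind (F : 'I_m.+1 -> nat) c : (\sum_k F k * (k == c) = F c)%N.
Proof.
rewrite (bigD1 c) //= eqxx muln1 big1 ?addn0 // => k kc.
by rewrite (negbTE kc) muln0.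
Qed.

Let recip a b c : N a b c = N b (dual c) (dual a).
Proof.
have := assoc a b (dual c) ord0.
under eq_bigr => k _ do rewrite delta invol.
rewrite sum_ind => ->; rewrite -[RHS]sum_ind; apply: eq_bigr => k _.
rewrite delta; congr (_ * nat_of_bool _)%N.
by apply/eqP/eqP => [->|->]; rewrite invol.
Qed.

Let anti' x y z : N x y z = N (dual y) (dual x) (dual z).
Proof. by rewrite -[in LHS](invol x) -[in LHS](invol y) -[in LHS](invol z) anti. Qed.

Let RrT_entry k j i : N k j i = N i (dual j) k.
Proof. by rewrite recip anti' !invol. Qed.

Definition Lr i : 'M[R]_m.+1 := \matrix_(k, j) (N i j k)%:R.
Definition Rr j : 'M[R]_m.+1 := \matrix_(k, i) (N i j k)%:R.
Definition Bm := \sum_j Rr j.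

Lemma Bm_entry k i : Bm k i = \sum_j (N i j k)%:R.
Proof. by rewrite /Bm summxE; apply: eq_bigr => j _; rewrite mxE. Qed.

Lemma BmT : Bm^T = Bm.
Proof.
apply/matrixP => k i; rewrite mxE !Bm_entry.
rewrite (reindex_inj (can_inj invol)) /=; apply: eq_bigr => j _.
by rewrite RrT_entry invol.
Qed.

Lemma Bm0 k i : 0 <= Bm k i.
Proof. by rewrite Bm_entry; apply: sumr_ge0 => j _; exact: ler0n. Qed.

Lemma Bmz k : Bm k ord0 = 1.
Proof.
rewrite Bm_entry (bigD1 k) //= unitL eqxx big1 ?addr0 // => j jk.
by rewrite unitL (negbTE jk).
Qed.

Lemma LR_comm a b : Lr a *m Rr b = Rr b *m Lr a.
Proof.
apply/matrixP => k l; rewrite !mxE.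
under eq_bigr => p _ do rewrite !mxE -natrM.
under [RHS]eq_bigr => p _ do rewrite !mxE -natrM.
rewrite -!natr_sum; congr (_%:R).
have := assoc a l b k => e.
rewrite (eq_bigr (fun p => N l b p * N a p k)%N); last by move=> p _; rewrite mulnC.
rewrite -e; apply: eq_bigr => p _; by rewrite mulnC.
Qed.

Lemma LB_comm a : Lr a *m Bm = Bm *m Lr a.
Proof. by rewrite /Bm mulmx_sumr mulmx_suml; apply: eq_bigr => j _; rewrite LR_comm. Qed.

Lemma Lr0 i k j : 0 <= Lr i k j.
Proof. by rewrite mxE ler0n. Qed.

Lemma form_tr n (X : 'M[R]_n) u : form X^T u u = form X u u.
Proof.
rewrite !formE exchange_big; apply: eq_bigr => i _; apply: eq_bigr => j _.
by rewrite mxE; ring.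
Qed.

Lemma fusion_pf : exists d : 'I_m.+1 -> R, (forall j, 0 < d j) /\
  forall i, exists c, [/\ 0 < c, (forall k, \sum_j Lr i k j * d j = c * d k) &
                         (forall j, \sum_k d k * Lr i k j = c * d j)].
Proof.
have [dr [Hd dp]] := exists_pf BmT Bm0 Bmz.
exists (fun j => dr 0 j); split => // i.
have [c1 e1] : exists c, dr *m (Lr i)^T = c *: dr.
  apply: (pf_commute BmT Bm0 Bmz Hd dp).
  by rewrite -{1}BmT -trmx_mul -LB_comm trmx_mul BmT.
have [c2 e2] : exists c, dr *m Lr i = c *: dr.
  exact: (pf_commute BmT Bm0 Bmz Hd dp (LB_comm i)).
have sp : 0 < sq dr.
  apply: sq_gt0; apply/eqP => /rowP /(_ ord0); rewrite mxE => h.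
  by have := dp ord0; rewrite h ltxx.
have c12 : c1 = c2.
  have h1 : form (Lr i)^T dr dr = c1 * sq dr by rewrite /form e1 -scalemxAl mxE -form1 /form mulmx1.
  have h2 : form (Lr i) dr dr = c2 * sq dr by rewrite /form e2 -scalemxAl mxE -form1 /form mulmx1.
  rewrite form_tr h2 in h1.
  by apply: (mulIf (lt0r_neq0 sp)); rewrite h1.
subst c2.
have col k : \sum_j Lr i k j * dr 0 j = c1 * dr 0 k.
  have := congr1 (fun M : 'M[R]_(1, m.+1) => M 0 k) e1; rewrite !mxE => <-.
  by apply: eq_bigr => j _; rewrite [(Lr i)^T j k]mxE mulrC.
have row j : \sum_k dr 0 k * Lr i k j = c1 * dr 0 j.
  have := congr1 (fun M : 'M[R]_(1, m.+1) => M 0 j) e2; rewrite !mxE => <-.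
  by [].
exists c1; split => //.
have := col i; rewrite (bigD1 ord0) //= mxE unitR eqxx mul1r => e.
have : 0 < c1 * dr 0 i.
  rewrite -e; apply: lt_le_trans (dp ord0) _; rewrite lerDl.
  by apply: sumr_ge0 => j _; rewrite mulr_ge0 ?Lr0 ?ltW.
by rewrite pmulr_lgt0.
Qed.

End Fusion.

Lemma tens11 (R : realType) (P Q : 'M[R[i]]_1) : (P *t Q) 0 0 = P 0 0 * Q 0 0.
Proof. by rewrite mxE; congr (P _ _ * Q _ _); apply: ord1. Qed.

Lemma fusion_mxE (R : realType) m N i : fusion_mx R (m:=m) N i = map_mx (real_complex R) (Lr R N i).
Proof. by apply/matrixP => k j; rewrite !mxE rmorph_nat. Qed.

Lemma conj_colw (R : realType) n (d : 'I_n -> R) : map_mx conjc (colw d) = colw d.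
Proof. by apply/matrixP => k j; rewrite !mxE conjc_real. Qed.

Lemma sc00 (R : realType) (a : R[i]) (A : 'M[R[i]]_1) : (a *: A) 0 0 = a * A 0 0.
Proof. by rewrite mxE. Qed.

Theorem mainTheorem17 (R : realType) (m : nat)
    (N : 'I_m.+1 -> 'I_m.+1 -> 'I_m.+1 -> nat) (dual : 'I_m.+1 -> 'I_m.+1)
    (n : nat) :
  is_fusion_ring N dual -> (2 <= n)%N ->
  psd (Tmx R N n) -> psd (Tmx R N n.-1).
Proof.
move=> FR n2 Hpsd.
have [d [dp Hi]] := fusion_pf R FR.
set w := colw d.
have Hw i : 0 < opnorm (fusion_mx R N i) /\
    ((w^T *m fusion_mx R N i *m w) 0 0 = (opnorm (fusion_mx R N i))%:C)%C.
  have [c [cp Hc Hr]] := Hi i.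
  have oc : opnorm (fusion_mx R N i) = c.
    by rewrite fusion_mxE (opnorm_eq ord0 (@Lr0 _ _ N i) dp (ltW cp) Hc Hr).
  rewrite oc; split => //.
  rewrite -mulmxA fusion_mxE (Mcolw Hc) mxE.
  under eq_bigr => k _ do rewrite !mxE -rmorphM.
  rewrite -rmorph_sum /=; congr (_%:C)%C.
  rewrite -[RHS]mulr1 -(sum_colw ord0 dp) mulr_sumr; apply: eq_bigr => k _.
  by rewrite expr2; ring.
case: n n2 Hpsd => [|[|k]] // _ Hpsd v /=.
have : 0 <= (((map_mx conjc (w *t v))^T : 'M_(1 * 1, m.+1 * m.+1 ^ k.+1)) *m
   (Tmx R N k.+2 : 'M_(m.+1 * m.+1 ^ k.+1)) *m (w *t v)) 0 0 := Hpsd (w *t v).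
rewrite map_mxT conj_colw trmx_tens /Tmx.
rewrite !mulmx_sumr !mulmx_suml !summxE.
move=> H; apply: le_trans H _; rewrite le_eqVlt; apply/orP; left; apply/eqP.
apply: eq_bigr => i _.
rewrite -!scalemxAr -!scalemxAl !sc00; congr (_ * _).
rewrite ntensmxSS !tensmx_mul tens11.
rewrite -!scalemxAr -!scalemxAl sc00.
have [op0 ->] := Hw i.
rewrite -rmorphM /= mulVf ?gt_eqF // mul1r.
by [].
Qed.
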